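(* Let $G$ be a finite group acting (faithfully) on a finite set $M$ via $\circ$, and let $\mathcal H$ be a family of subgroups of $G$. Suppose $f:M\to S$ hides some $H\in\mathcal H$ by symmetries, i.e. $f(x)=f(y)\iff H\circ x=H\circ y$ for all $x,y\in M$. Let $B=\{m_1,\dots,m_t\}\subseteq M$ be an $\mathcal H$-strong base. Then the function $f_{\rm HSP}:G\to S^t$, $f_{\rm HSP}(g)=(f(g\circ m_1),\dots,f(g\circ m_t))$, hides $H$ in the sense of the hidden subgroup problem: for all $x,y\in G$, $f_{\rm HSP}(x)=f_{\rm HSP}(y)\iff Hx=Hy$.
   Context: For $m\in M$, $G_m=\{g\in G: g\circ m=m\}$ is the stabilizer of $m$. For $H\le G$, a set $B\subseteq M$ is an $H$-strong base if for every $g\in G$, $\bigcap_{m\in B} H\,G_{g\circ m}=H$ (here $HG_{m}=\{hk:h\in H,k\in G_m\}$). $B$ is an $\mathcal H$-strong base if it is an $H$-strong base for every $H\in\mathcal H$. *)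

(* Defs.v *)
From mathcomp Require Import all_boot all_fingroup.
Set Implicit Arguments. Unset Strict Implicit. Unset Printing Implicit Defensive.
Local Open Scope group_scope.

Section Defs.
Variables (gT : finGroupType) (M : finType) (act : gT -> M -> M).

Definition stab (m : M) : {set gT} := [set g : gT | act g m == m].

Definition horbit (H : {set gT}) (x : M) : {set M} := [set act h x | h in H].

Definition strong_base (H : {set gT}) (B : {set M}) : Prop :=
  forall g : gT, \bigcap_(m in B) (H * stab (act g m)) = H.

Definition family_strong_base (calH : {set {group gT}}) (B : {set M}) : Prop :=
  forall H : {group gT}, H \in calH -> strong_base H B.

Definition hides_by_symmetries (S : Type) (H : {set gT}) (f : M -> S) : Prop :=
  forall x y : M, f x = f y <-> horbit H x = horbit H y.
End Defs.

(* Main.v *)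
Require Import Defs.
From mathcomp Require Import all_boot all_fingroup.
Local Open Scope group_scope.

Theorem lemma1 (gT : finGroupType) (M : finType) (act : gT -> M -> M)
  (act1 : forall m : M, act 1 m = m)
  (actM : forall (g h : gT) (m : M), act (g * h) m = act g (act h m))
  (faithful : forall g : gT, (forall m : M, act g m = m) -> g = 1)
  (calH : {set {group gT}}) (H : {group gT}) (HcalH : H \in calH)
  (S : Type) (f : M -> S) (hf : hides_by_symmetries act H f)
  (ms : seq M) (hB : family_strong_base act calH [set m in ms]) :
  forall x y : gT,
    [seq f (act x m) | m <- ms] = [seq f (act y m) | m <- ms] <->
    H :* x = H :* y.
Proof.
have horbH : forall h z, h \in H -> horbit act H (act h z) = horbit act H z.
  move=> h z hH; apply/setP=> w; apply/imsetP/imsetP => [[k kH ->]|[k kH ->]].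
    by exists (k * h); [rewrite groupM | rewrite actM].
  exists (k * h^-1); first by rewrite groupM ?groupV.
  by rewrite -actM mulgKV.
move=> x y; split.
- move=> /eq_in_map E.
  apply/rcoset_eqP; rewrite mem_rcoset.
  rewrite -(hB H HcalH y); apply/bigcapP => m; rewrite inE => mms.
  have /hf hxy := E m mms.
  have : act y m \in horbit act H (act x m) by rewrite hxy; apply/imsetP; exists 1; rewrite ?group1 ?act1.
  case/imsetP => h hH Hy.
  have -> : x * y^-1 = h^-1 * (h * x * y^-1) by rewrite -!mulgA mulKg.
  apply: mem_mulg; first by rewrite groupV.
  by rewrite inE !actM -(actM y^-1) mulVg act1 -Hy.
- move=> E; apply/eq_in_map => m _.
  have : x \in H :* y by rewrite -E rcoset_refl.
  rewrite mem_rcoset => hH.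
  apply/hf.
  have -> : x = (x * y^-1) * y by rewrite mulgKV.
  by rewrite actM horbH.
Qed.
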